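(* There is an absolute constant $c>0$ such that for all positive integers $t,N$ with $t\le \frac{N^{2(e^4-1)}}{36}$, $$\inf_{g}\ \sup_{R}\ \mathbb{E}\big[W_1(\Delta_R,g(\mathbf S))\big]\ \ge\ c\max\Big\{\frac1t,\ \frac{1}{\sqrt{t\log N}}\Big\},$$ where the supremum is over all probability distributions $R$ on $[0,1]^2$ and the infimum is over all estimators $g$ mapping the sample $\mathbf S$ to a probability distribution on $[-1,1]$.
   Context: Sampling model: given a probability distribution $R$ on $[0,1]^2$ and positive integers $N,t$, draw $(p_i,q_i)\sim R$ independently for $i=1,\dots,N$, and then, independently given these, $X_i\sim \mathrm{Binomial}(t,p_i)$ and $Y_i\sim\mathrm{Binomial}(t,q_i)$. The observed sample is $\mathbf S=\{(X_i,Y_i)\}_{i=1}^N$. For $(p,q)\sim R$ let $\Delta_R$ denote the distribution of $\delta=q-p$ on $[-1,1]$. $W_1$ denotes the Wasserstein-1 distance: $W_1(P,Q)=\sup_{f}\int f\,(dP-dQ)$, the supremum over all $1$-Lipschitz functions $f$ on the common support space. *)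

(* Defs.v *)
From Stdlib Require Import Reals Lra List ClassicalEpsilon.
Import ListNotations.
Open Scope R_scope.

Definition in01 (x : R) : Prop := 0 <= x <= 1.
Definition inPM1 (x : R) : Prop := -1 <= x <= 1.

Definition cont_sq (f : R -> R -> R) : Prop :=
  forall p q, in01 p -> in01 q -> forall eps, 0 < eps ->
  exists delta, 0 < delta /\
    forall p' q', in01 p' -> in01 q' -> Rabs (p' - p) < delta -> Rabs (q' - q) < delta ->
      Rabs (f p' q' - f p q) < eps.

Definition cont_pm1 (f : R -> R) : Prop :=
  forall x, inPM1 x -> forall eps, 0 < eps ->
  exists delta, 0 < delta /\
    forall y, inPM1 y -> Rabs (y - x) < delta -> Rabs (f y - f x) < eps.

(* A probability distribution on the compact set [0,1]^2, represented (Riesz)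
   by its expectation functional on continuous functions: linear, positive,
   normalised.  Values on non-continuous arguments are irrelevant. *)
Record dist2 : Type := {
  E2 : (R -> R -> R) -> R;
  E2_add : forall f g, cont_sq f -> cont_sq g ->
     E2 (fun p q => f p q + g p q) = E2 f + E2 g;
  E2_scal : forall a f, cont_sq f -> E2 (fun p q => a * f p q) = a * E2 f;
  E2_pos : forall f, cont_sq f -> (forall p q, in01 p -> in01 q -> 0 <= f p q) -> 0 <= E2 f;
  E2_one : E2 (fun _ _ => 1) = 1 }.

(* A probability distribution on [-1,1], represented likewise. *)
Record dist1 : Type := {
  E1 : (R -> R) -> R;
  E1_add : forall f g, cont_pm1 f -> cont_pm1 g -> E1 (fun x => f x + g x) = E1 f + E1 g;
  E1_scal : forall a f, cont_pm1 f -> E1 (fun x => a * f x) = a * E1 f;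
  E1_pos : forall f, cont_pm1 f -> (forall x, inPM1 x -> 0 <= f x) -> 0 <= E1 f;
  E1_one : E1 (fun _ => 1) = 1 }.

Definition Delta_E (Rd : dist2) (f : R -> R) : R := E2 Rd (fun p q => f (q - p)).

Definition Rsup (A : R -> Prop) : R := epsilon (inhabits 0) (fun w => is_lub A w).

Definition lip1 (f : R -> R) : Prop :=
  forall x y, inPM1 x -> inPM1 y -> Rabs (f x - f y) <= Rabs (x - y).

(* Wasserstein-1 distance (Kantorovich-Rubinstein dual form) between Delta_R and mu *)
Definition W1 (Rd : dist2) (mu : dist1) : R :=
  Rsup (fun w => exists f, lip1 f /\ w = Delta_E Rd f - E1 mu f).

Definition binom_pmf (t x : nat) (p : R) : R :=
  C t x * p ^ x * (1 - p) ^ (t - x).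

Definition pairs_upto (t : nat) : list (nat * nat) :=
  list_prod (seq 0 (S t)) (seq 0 (S t)).

Fixpoint samples (N t : nat) : list (list (nat * nat)) :=
  match N with
  | O => [ [] ]
  | S n => flat_map (fun s => map (fun xy => xy :: s) (pairs_upto t)) (samples n t)
  end.

Definition sample_prob (Rd : dist2) (t : nat) (s : list (nat * nat)) : R :=
  fold_right Rmult 1
    (map (fun xy => E2 Rd (fun p q => binom_pmf t (fst xy) p * binom_pmf t (snd xy) q)) s).

Definition risk (t N : nat) (Rd : dist2) (g : list (nat * nat) -> dist1) : R :=
  fold_right Rplus 0
    (map (fun s => sample_prob Rd t s * W1 Rd (g s)) (samples N t)).

(* Main.v *)
Require Import Defs.
From Stdlib Require Import Reals Lra Lia List ClassicalEpsilon FunctionalExtensionality.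
Require Import Defs.
Import ListNotations.
Open Scope R_scope.

Lemma abs_le_elim x y : Rabs x <= y -> -y <= x <= y.
Proof. intros H. pose proof (Rle_abs x). pose proof (Rle_abs (-x)). rewrite Rabs_Ropp in H1. lra. Qed.

Definition lsum {A} (l : list A) (F : A -> R) : R := fold_right Rplus 0 (map F l).

Lemma lsum_nil {A} (F : A -> R) : lsum [] F = 0. Proof. reflexivity. Qed.
Lemma lsum_cons {A} (a : A) l F : lsum (a :: l) F = F a + lsum l F. Proof. reflexivity. Qed.
Lemma lsum_app {A} (l1 l2 : list A) F : lsum (l1 ++ l2) F = lsum l1 F + lsum l2 F.
Proof. induction l1; simpl; unfold lsum in *; simpl; [lra|]. rewrite IHl1; lra. Qed.
Lemma lsum_map {A B} (h : A -> B) l F : lsum (map h l) F = lsum l (fun x => F (h x)).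
Proof. induction l; [reflexivity|]. rewrite map_cons, !lsum_cons, IHl. reflexivity. Qed.
Lemma lsum_flat_map {A B} (G : A -> list B) l F :
  lsum (flat_map G l) F = lsum l (fun a => lsum (G a) F).
Proof. induction l; [reflexivity|]. simpl flat_map. rewrite lsum_app, lsum_cons, IHl. reflexivity. Qed.
Lemma lsum_ext {A} l (F G : A -> R) : (forall x, In x l -> F x = G x) -> lsum l F = lsum l G.
Proof. induction l; intros H; [reflexivity|]. rewrite !lsum_cons, H, IHl; auto. intros; apply H; simpl; auto. simpl; auto. Qed.
Lemma lsum_le {A} l (F G : A -> R) : (forall x, In x l -> F x <= G x) -> lsum l F <= lsum l G.
Proof. induction l; intros H; [unfold lsum; simpl; lra|]. rewrite !lsum_cons.
  assert (F a <= G a) by (apply H; simpl; auto).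
  assert (lsum l F <= lsum l G) by (apply IHl; intros; apply H; simpl; auto). lra. Qed.
Lemma lsum_plus {A} l (F G : A -> R) : lsum l (fun x => F x + G x) = lsum l F + lsum l G.
Proof. induction l; [unfold lsum; simpl; lra|]. rewrite !lsum_cons, IHl. lra. Qed.
Lemma lsum_minus {A} l (F G : A -> R) : lsum l (fun x => F x - G x) = lsum l F - lsum l G.
Proof. induction l; [unfold lsum; simpl; lra|]. rewrite !lsum_cons, IHl. lra. Qed.
Lemma lsum_scal {A} l (F : A -> R) c : lsum l (fun x => c * F x) = c * lsum l F.
Proof. induction l; [unfold lsum; simpl; lra|]. rewrite !lsum_cons, IHl. lra. Qed.
Lemma lsum_scal_r {A} l (F : A -> R) c : lsum l (fun x => F x * c) = lsum l F * c.
Proof. induction l; [unfold lsum; simpl; lra|]. rewrite !lsum_cons, IHl. lra. Qed.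
Lemma lsum_nonneg {A} l (F : A -> R) : (forall x, In x l -> 0 <= F x) -> 0 <= lsum l F.
Proof. intros H. apply Rle_trans with (lsum l (fun _ => 0)).
  - clear H. induction l; [unfold lsum; simpl; lra|]. rewrite lsum_cons. lra.
  - apply lsum_le; auto. Qed.
Lemma lsum_abs {A} l (F : A -> R) : Rabs (lsum l F) <= lsum l (fun x => Rabs (F x)).
Proof. induction l; [unfold lsum; simpl; rewrite Rabs_R0; lra|]. rewrite !lsum_cons.
  eapply Rle_trans; [apply Rabs_triang|]. lra. Qed.
Lemma lsum_prod {A B} (l1 : list A) (l2 : list B) F G :
  lsum (list_prod l1 l2) (fun xy => F (fst xy) * G (snd xy)) = lsum l1 F * lsum l2 G.
Proof. induction l1; [unfold lsum; simpl; lra|]. simpl list_prod. rewrite lsum_app, lsum_map, IHl1, lsum_cons.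
  simpl. rewrite lsum_scal. lra. Qed.
Lemma lsum_seq t F : lsum (seq 0 (S t)) F = sum_f_R0 F t.
Proof. induction t. unfold lsum; simpl; lra. rewrite seq_S, lsum_app, IHt, tech5. unfold lsum at 1; simpl. lra. Qed.

Lemma sum_minus' (A B : nat -> R) n : sum_f_R0 (fun k => A k - B k) n = sum_f_R0 A n - sum_f_R0 B n.
Proof. induction n; simpl; [lra|]. rewrite IHn; lra. Qed.
Lemma sum_scal_l (A : nat -> R) n c : sum_f_R0 (fun k => c * A k) n = c * sum_f_R0 A n.
Proof. induction n; simpl; [lra|]. rewrite IHn; lra. Qed.
Lemma sum_zero n : sum_f_R0 (fun _ => 0) n = 0.
Proof. induction n; simpl; [lra|]. rewrite IHn; lra. Qed.
Lemma sum_swap (F : nat -> nat -> R) a b :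
  sum_f_R0 (fun i => sum_f_R0 (fun j => F i j) b) a = sum_f_R0 (fun j => sum_f_R0 (fun i => F i j) a) b.
Proof. induction a; simpl. reflexivity. rewrite IHa, <- sum_plus. reflexivity. Qed.
Lemma sum_mult (A B : nat -> R) a b :
  sum_f_R0 A a * sum_f_R0 B b = sum_f_R0 (fun i => sum_f_R0 (fun j => A i * B j) b) a.
Proof. induction a; simpl. rewrite sum_scal_l; reflexivity. rewrite <- IHa, sum_scal_l. lra. Qed.

Fixpoint binom (n k : nat) : R :=
  match n, k with
  | _, O => 1
  | O, S _ => 0
  | S n', S k' => binom n' k' + binom n' (S k')
  end.

Lemma binom_gt n k : (n < k)%nat -> binom n k = 0.
Proof. revert k; induction n; intros k H; destruct k; try lia; simpl; auto.
  rewrite !IHn; try lia; lra. Qed.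
Lemma binom_n0 n : binom n 0 = 1.
Proof. destruct n; reflexivity. Qed.
Lemma binom_nonneg n k : 0 <= binom n k.
Proof. revert k; induction n; intros k; destruct k; simpl; try lra.
  pose proof (IHn k); pose proof (IHn (S k)); lra. Qed.

Lemma shift_sum (g : nat -> R) n : sum_f_R0 (fun i => g (S i)) n = sum_f_R0 g (S n) - g O.
Proof. rewrite (decomp_sum g (S n)) by lia. simpl pred. lra. Qed.

Lemma binom_sum n : sum_f_R0 (binom n) n = 2 ^ n.
Proof. induction n. simpl; lra.
  rewrite decomp_sum by lia. simpl pred.
  replace (sum_f_R0 (fun i => binom (S n) (S i)) n) with
    (sum_f_R0 (binom n) n + sum_f_R0 (fun i => binom n (S i)) n)
    by (rewrite <- sum_plus; apply sum_eq; intros; reflexivity).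
  rewrite shift_sum, tech5, (binom_gt n (S n)) by lia. rewrite IHn, !binom_n0. simpl. lra. Qed.

Definition Sd (n : nat) (f : nat -> R) : R := sum_f_R0 (fun k => (-1)^k * binom n k * f k) n.

Lemma Sd_rec n f : Sd (S n) f = Sd n f - Sd n (fun k => f (S k)).
Proof. unfold Sd. rewrite decomp_sum by lia. simpl pred.
  replace (sum_f_R0 (fun i => (-1) ^ S i * binom (S n) (S i) * f (S i)) n) with
    (sum_f_R0 (fun i => (-1) ^ S i * binom n (S i) * f (S i)) n -
     sum_f_R0 (fun i => (-1) ^ i * binom n i * f (S i)) n).
  2:{ rewrite <- sum_minus'. apply sum_eq; intros. simpl. ring. }
  rewrite (shift_sum (fun i => (-1) ^ i * binom n i * f i)), tech5, (binom_gt n (S n)) by lia.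
  rewrite !binom_n0. simpl. ring. Qed.

Lemma Sd_ext n f g : (forall k, f k = g k) -> Sd n f = Sd n g.
Proof. intros H; unfold Sd; apply sum_eq; intros; rewrite H; auto. Qed.
Lemma Sd_minus n f g : Sd n (fun k => f k - g k) = Sd n f - Sd n g.
Proof. unfold Sd. rewrite <- sum_minus'. apply sum_eq; intros; ring. Qed.
Lemma Sd_zero n : Sd n (fun _ => 0) = 0.
Proof. unfold Sd. transitivity (sum_f_R0 (fun _ => 0) n); [apply sum_eq; intros; ring | apply sum_zero]. Qed.

Fixpoint Pol (d : nat) (f : nat -> R) : Prop :=
  match d with
  | O => forall k, f k = f O
  | S d' => Pol d' (fun k => f (S k) - f k)
  end.

Lemma Pol_ext d f g : (forall k, f k = g k) -> Pol d f -> Pol d g.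
Proof. revert f g; induction d; simpl; intros f g H P.
  - intros k; rewrite <- !H; auto.
  - eapply IHd; [|exact P]. intros; simpl; rewrite !H; auto. Qed.

Lemma Pol_lin d f g a b : Pol d f -> Pol d g -> Pol d (fun k => a * f k + b * g k).
Proof. revert f g; induction d; simpl; intros f g P Q.
  - intros k; rewrite P, Q; auto.
  - eapply Pol_ext; [|apply (IHd _ _ P Q)]. intros; simpl; ring. Qed.

Lemma Pol_shift d f : Pol d f -> Pol d (fun k => f (S k)).
Proof. revert f; induction d; simpl; intros f P.
  - intros k; rewrite P, (P 1%nat); auto.
  - apply (IHd _ P). Qed.

Lemma Pol_mono d f : Pol d f -> Pol (S d) f.
Proof. revert f; induction d; simpl; intros f P.
  - intros k; rewrite (P (S k)), (P k), (P 1%nat); ring.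
  - apply (IHd _ P). Qed.

Lemma Pol_mul_lin d f c h : Pol d f -> Pol (S d) (fun k => (c + INR k * h) * f k).
Proof. revert f c; induction d; intros f c P.
  - cbn -[INR]. intros k. simpl in P. rewrite !S_INR, (P (S k)), (P k), (P 1%nat). simpl INR. ring.
  - change (Pol (S d) (fun k => (c + INR (S k) * h) * f (S k) - (c + INR k * h) * f k)).
    eapply Pol_ext with (f := fun k => 1 * ((c + INR k * h) * (f (S k) - f k)) + h * f (S k)).
    { intros; cbv beta; rewrite S_INR; ring. }
    apply Pol_lin. apply (IHd (fun k => f (S k) - f k) c). exact P.
    apply Pol_shift. exact P. Qed.

Lemma Pol_pow m c h : Pol m (fun k => (c + INR k * h) ^ m).
Proof. induction m. simpl; intros; auto.
  eapply Pol_ext; [|apply (Pol_mul_lin _ _ c h IHm)]. intros; simpl; auto. Qed.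

Lemma Pol_vanish n d f : (d < n)%nat -> Pol d f -> Sd n f = 0.
Proof. revert d f; induction n; intros d f Hd P. lia.
  rewrite Sd_rec. rewrite <- Sd_minus.
  destruct d.
  - simpl in P. rewrite (Sd_ext _ _ (fun _ => 0)). apply Sd_zero. intros k; rewrite (P k), (P (S k)); ring.
  - rewrite (Sd_ext _ _ (fun k => (fun _ => 0) k - (fun k => f (S k) - f k) k)) by (intros; ring).
    rewrite Sd_minus, Sd_zero, (IHn d). ring. lia. exact P. Qed.
Definition obs (Rd : dist2) (t : nat) (xy : nat * nat) : R :=
  E2 Rd (fun p q => binom_pmf t (fst xy) p * binom_pmf t (snd xy) q).

Lemma sample_prob_cons Rd t xy s : sample_prob Rd t (xy :: s) = obs Rd t xy * sample_prob Rd t s.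
Proof. reflexivity. Qed.

Lemma samples_S n t : samples (S n) t = flat_map (fun s => map (fun xy => xy :: s) (pairs_upto t)) (samples n t).
Proof. reflexivity. Qed.

Lemma sample_prob_nonneg Rd t : (forall xy, 0 <= obs Rd t xy) -> forall s, 0 <= sample_prob Rd t s.
Proof. intros H s; induction s. unfold sample_prob; simpl; lra.
  rewrite sample_prob_cons. apply Rmult_le_pos; auto. Qed.

Lemma sum_samples Rd t N : lsum (samples N t) (sample_prob Rd t) = (lsum (pairs_upto t) (obs Rd t)) ^ N.
Proof. induction N. unfold lsum; simpl; unfold sample_prob; simpl; lra.
  rewrite samples_S, lsum_flat_map.
  rewrite (lsum_ext _ _ (fun s => lsum (pairs_upto t) (obs Rd t) * sample_prob Rd t s)).
  rewrite lsum_scal, IHN. simpl; ring.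
  intros s _. rewrite lsum_map. rewrite <- lsum_scal_r. apply lsum_ext; intros; reflexivity. Qed.

Lemma abs_prod_diff a A b B : 0 <= A -> 0 <= b -> Rabs (a * A - b * B) <= Rabs (a - b) * A + b * Rabs (A - B).
Proof. intros HA Hb.
  replace (a * A - b * B) with ((a - b) * A + b * (A - B)) by ring.
  eapply Rle_trans; [apply Rabs_triang|]. rewrite !Rabs_mult, (Rabs_pos_eq A), (Rabs_pos_eq b) by lra. lra. Qed.

Lemma diff_samples Ra Rb t N T :
  (forall xy, 0 <= obs Ra t xy) -> (forall xy, 0 <= obs Rb t xy) ->
  lsum (pairs_upto t) (obs Ra t) = 1 -> lsum (pairs_upto t) (obs Rb t) = 1 ->
  lsum (pairs_upto t) (fun xy => Rabs (obs Ra t xy - obs Rb t xy)) <= T ->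
  lsum (samples N t) (fun s => Rabs (sample_prob Ra t s - sample_prob Rb t s)) <= INR N * T.
Proof. intros Ha Hb Sa Sb HT. induction N.
  unfold lsum; simpl; unfold sample_prob; simpl. rewrite Rminus_diag, Rabs_R0. lra.
  rewrite samples_S, lsum_flat_map.
  eapply Rle_trans. apply lsum_le. intros s _. rewrite lsum_map.
  apply (lsum_le _ _ (fun xy => Rabs (obs Ra t xy - obs Rb t xy) * sample_prob Ra t s
            + obs Rb t xy * Rabs (sample_prob Ra t s - sample_prob Rb t s))).
  intros xy _. rewrite !sample_prob_cons. apply abs_prod_diff; auto. apply sample_prob_nonneg; auto.
  rewrite (lsum_ext _ _ (fun s => lsum (pairs_upto t) (fun xy => Rabs (obs Ra t xy - obs Rb t xy)) * sample_prob Ra t s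
      + Rabs (sample_prob Ra t s - sample_prob Rb t s))).
  2:{ intros s _. rewrite lsum_plus, lsum_scal_r, lsum_scal_r, Sb. ring. }
  rewrite lsum_plus, lsum_scal, sum_samples, Sa, pow1. rewrite S_INR.
  assert (0 <= T). { eapply Rle_trans; [|exact HT]. apply lsum_nonneg; intros; apply Rabs_pos. }
  lra. Qed.

Lemma lip1_cont f : lip1 f -> cont_pm1 f.
Proof. intros Hf x Hx eps He. exists eps; split; auto. intros y Hy Hxy.
  eapply Rle_lt_trans; [apply Hf; auto|]. auto. Qed.
Lemma const_cont c : cont_pm1 (fun _ => c).
Proof. intros x Hx eps He. exists 1; split; [lra|]. intros. rewrite Rminus_diag, Rabs_R0; auto. Qed.

Lemma E1_const (mu : dist1) c : E1 mu (fun _ => c) = c.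
Proof. pose proof (E1_scal mu c (fun _ => 1) (const_cont 1)) as H.
  rewrite E1_one in H. replace (fun _ : R => c) with (fun _ : R => c * 1). lra.
  apply functional_extensionality; intros; ring. Qed.

Lemma E1_lip_lb (mu : dist1) f : lip1 f -> f 0 - 1 <= E1 mu f.
Proof. intros Hf.
  pose proof (E1_add mu f (fun _ => - f 0 + 1) (lip1_cont f Hf) (const_cont _)) as H.
  rewrite E1_const in H.
  assert (0 <= E1 mu (fun x => f x + (- f 0 + 1))).
  { apply E1_pos. intros x Hx eps He. destruct (lip1_cont f Hf x Hx eps He) as [d [Hd1 Hd2]].
    exists d; split; auto. intros y Hy Hyx. replace (f y + (- f 0 + 1) - (f x + (- f 0 + 1))) with (f y - f x) by ring. auto.
    intros x Hx. assert (Rabs (f x - f 0) <= Rabs (x - 0)) by (apply Hf; unfold inPM1 in *; lra).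
    unfold inPM1 in Hx. rewrite Rminus_0_r in H0. apply abs_le_elim in H0. 
    assert (Rabs x <= 1) by (apply Rabs_le; lra). lra. }
  lra. Qed.

Lemma E1_neg (mu : dist1) f : lip1 f -> E1 mu (fun x => -1 * f x) = - E1 mu f.
Proof. intros Hf. rewrite E1_scal by (apply lip1_cont; auto). ring. Qed.

Lemma lip1_neg f : lip1 f -> lip1 (fun x => -1 * f x).
Proof. intros Hf x y Hx Hy. replace (-1 * f x - -1 * f y) with (- (f x - f y)) by ring.
  rewrite Rabs_Ropp; auto. Qed.

Lemma lip1_zero : lip1 (fun _ => 0).
Proof. intros x y _ _. rewrite Rminus_diag, Rabs_R0. apply Rabs_pos. Qed.

Lemma W1_props Rd mu :
  (forall f, lip1 f -> Delta_E Rd f <= f 0 + 1) -> Delta_E Rd (fun _ => 0) = 0 ->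
  (forall f, lip1 f -> Delta_E Rd f - E1 mu f <= W1 Rd mu) /\ 0 <= W1 Rd mu.
Proof. intros HD HD0.
  set (A := fun w => exists f, lip1 f /\ w = Delta_E Rd f - E1 mu f).
  assert (Hl : is_lub A (W1 Rd mu)).
  { unfold W1, Rsup. apply epsilon_spec.
    destruct (completeness A) as [m Hm]. exists 2. intros w [f [Hf ->]].
    pose proof (HD f Hf). pose proof (E1_lip_lb mu f Hf). lra.
    exists 0, (fun _ => 0). split. apply lip1_zero. rewrite HD0, E1_const. ring.
    exists m; exact Hm. }
  destruct Hl as [Hub _]. split.
  - intros f Hf. apply Hub. exists f; auto.
  - apply Hub. exists (fun _ => 0). split. apply lip1_zero. rewrite HD0, E1_const. ring. Qed.

Lemma lecam t N (Ra Rb : dist2) (g : list (nat * nat) -> dist1) D T :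
  (forall mu, W1 Ra mu + W1 Rb mu >= D) -> 0 <= D ->
  (forall mu, 0 <= W1 Ra mu) -> (forall mu, 0 <= W1 Rb mu) ->
  (forall xy, 0 <= obs Ra t xy) -> (forall xy, 0 <= obs Rb t xy) ->
  lsum (pairs_upto t) (obs Ra t) = 1 -> lsum (pairs_upto t) (obs Rb t) = 1 ->
  lsum (pairs_upto t) (fun xy => Rabs (obs Ra t xy - obs Rb t xy)) <= T ->
  INR N * T <= 1/2 ->
  risk t N Ra g + risk t N Rb g >= D / 2.
Proof. intros HW HD Wa Wb Ha Hb Sa Sb HT HNT.
  pose proof (diff_samples Ra Rb t N T Ha Hb Sa Sb HT) as Hdiff.
  change (lsum (samples N t) (fun s => sample_prob Ra t s * W1 Ra (g s)) +
          lsum (samples N t) (fun s => sample_prob Rb t s * W1 Rb (g s)) >= D / 2).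
  rewrite <- lsum_plus.
  assert (lsum (samples N t) (fun s => D * (sample_prob Ra t s - Rabs (sample_prob Ra t s - sample_prob Rb t s)))
          <= lsum (samples N t) (fun s => sample_prob Ra t s * W1 Ra (g s) + sample_prob Rb t s * W1 Rb (g s))).
  { apply lsum_le. intros s _.
    pose proof (sample_prob_nonneg Ra t Ha s). pose proof (sample_prob_nonneg Rb t Hb s).
    pose proof (HW (g s)). pose proof (Wa (g s)). pose proof (Wb (g s)).
    set (pa := sample_prob Ra t s) in *. set (pb := sample_prob Rb t s) in *.
    set (wa := W1 Ra (g s)) in *. set (wb := W1 Rb (g s)) in *.
    destruct (Rle_dec pa pb).
    - rewrite Rabs_left1 by lra. nra.
    - rewrite Rabs_pos_eq by lra. nra. }
  rewrite lsum_scal, lsum_minus, sum_samples, Sa, pow1 in H. nra. Qed.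
Lemma sin_abs_le u : Rabs (sin u) <= Rabs u.
Proof.
  assert (Hp : forall v, 0 < v -> Rabs (sin v) <= v).
  { intros v Hv. pose proof (sin_lt_x v Hv). pose proof (SIN_bound v). pose proof PI2_1.
    destruct (Rle_dec 1 v). apply Rabs_le. lra.
    assert (0 <= sin v) by (apply sin_ge_0; lra). rewrite Rabs_pos_eq; lra. }
  destruct (Rtotal_order u 0) as [H|[H|H]].
  - pose proof (Hp (- u) ltac:(lra)). rewrite sin_neg, Rabs_Ropp in H0. rewrite (Rabs_left u) by lra. lra.
  - subst. rewrite sin_0, Rabs_R0. lra.
  - rewrite (Rabs_pos_eq u) by lra. apply Hp; lra. Qed.

Lemma cos_lip a b : Rabs (cos a - cos b) <= Rabs (a - b).
Proof. rewrite form2. rewrite !Rabs_mult.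
  pose proof (sin_abs_le ((a - b) / 2)). pose proof (SIN_bound ((a + b) / 2)).
  assert (Rabs (sin ((a + b) / 2)) <= 1) by (apply Rabs_le; lra).
  replace (Rabs (-2)) with 2 by (rewrite Rabs_left; lra).
  replace (Rabs ((a - b) / 2)) with (Rabs (a - b) / 2) in H.
  2:{ unfold Rdiv. rewrite Rabs_mult, (Rabs_pos_eq (/2)) by lra. reflexivity. }
  pose proof (Rabs_pos (sin ((a - b) / 2))). pose proof (Rabs_pos (sin ((a + b) / 2))). nra. Qed.

Lemma cos_kpi k : cos (INR k * PI) = (-1) ^ k.
Proof. induction k. simpl. rewrite Rmult_0_l, cos_0; auto.
  rewrite S_INR. replace ((INR k + 1) * PI) with (INR k * PI + PI) by ring.
  rewrite neg_cos, IHk. simpl; ring. Qed.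

Lemma m1_sq k : (-1) ^ k * (-1) ^ k = 1.
Proof. rewrite <- pow_add. replace (k + k)%nat with (2 * k)%nat by lia. apply pow_1_even. Qed.

Lemma m1_bounds k : -1 <= (-1) ^ k <= 1.
Proof. apply abs_le_elim. rewrite pow_1_abs; lra. Qed.

Definition qn (n : nat) (h : R) (k : nat) : R := 1/2 + (- INR n * h / 2 + INR k * h).
Definition wa (n k : nat) : R := (1 + (-1) ^ k) * binom n k / 2 ^ n.
Definition wb (n k : nat) : R := (1 - (-1) ^ k) * binom n k / 2 ^ n.

Lemma wa_nonneg n k : 0 <= wa n k.
Proof. unfold wa. pose proof (m1_bounds k). pose proof (binom_nonneg n k). pose proof (pow_lt 2 n).
  apply Rmult_le_pos. apply Rmult_le_pos; lra. left; apply Rinv_0_lt_compat; lra. Qed.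
Lemma wb_nonneg n k : 0 <= wb n k.
Proof. unfold wb. pose proof (m1_bounds k). pose proof (binom_nonneg n k). pose proof (pow_lt 2 n).
  apply Rmult_le_pos. apply Rmult_le_pos; lra. left; apply Rinv_0_lt_compat; lra. Qed.

Lemma Sd_const n : (0 < n)%nat -> Sd n (fun _ => 1) = 0.
Proof. intros Hn. apply (Pol_vanish n 0); auto. simpl; auto. Qed.

Lemma wa_sum n : (0 < n)%nat -> sum_f_R0 (wa n) n = 1.
Proof. intros Hn. unfold wa.
  transitivity ((sum_f_R0 (binom n) n + Sd n (fun _ => 1)) / 2 ^ n).
  - unfold Sd, Rdiv. rewrite <- sum_plus, Rmult_comm, scal_sum. apply sum_eq; intros; ring.
  - rewrite Sd_const, binom_sum by auto. field. apply pow_nonzero; lra. Qed.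
Lemma wb_sum n : (0 < n)%nat -> sum_f_R0 (wb n) n = 1.
Proof. intros Hn. unfold wb.
  transitivity ((sum_f_R0 (binom n) n - Sd n (fun _ => 1)) / 2 ^ n).
  - unfold Sd, Rdiv. rewrite <- sum_minus', Rmult_comm, scal_sum. apply sum_eq; intros; ring.
  - rewrite Sd_const, binom_sum by auto. field. apply pow_nonzero; lra. Qed.

Lemma qn_in01 n h k : 0 < h -> INR n * h <= 1 -> (k <= n)%nat -> in01 (qn n h k).
Proof. intros Hh Hnh Hk. unfold in01, qn. apply le_INR in Hk.
  assert (0 <= INR k) by apply pos_INR. nra. Qed.

Section Mk.
Variables (n : nat) (w q : nat -> R).
Hypothesis Hw : forall k, 0 <= w k.
Hypothesis Hq : forall k, (k <= n)%nat -> in01 (q k).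
Hypothesis Hs : sum_f_R0 w n = 1.

Definition mkE (F : R -> R -> R) : R := sum_f_R0 (fun k => w k * F 0 (q k)) n.

Lemma mkE_add f g : cont_sq f -> cont_sq g -> mkE (fun p q => f p q + g p q) = mkE f + mkE g.
Proof. intros; unfold mkE. rewrite <- sum_plus. apply sum_eq; intros; ring. Qed.
Lemma mkE_scal a f : cont_sq f -> mkE (fun p q => a * f p q) = a * mkE f.
Proof. intros; unfold mkE. rewrite <- sum_scal_l. apply sum_eq; intros; ring. Qed.
Lemma mkE_pos f : cont_sq f -> (forall p q, in01 p -> in01 q -> 0 <= f p q) -> 0 <= mkE f.
Proof. intros _ H; unfold mkE. eapply Rle_trans; [right; symmetry; apply (sum_zero n)|]. apply sum_Rle. intros k Hk.
  apply Rmult_le_pos; auto. apply H. unfold in01; lra. auto. Qed.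
Lemma mkE_one : mkE (fun _ _ => 1) = 1.
Proof. unfold mkE. transitivity (sum_f_R0 w n); [apply sum_eq; intros; ring | exact Hs]. Qed.

Definition mkd : dist2 := Build_dist2 mkE mkE_add mkE_scal mkE_pos mkE_one.

Lemma mkd_Delta f : Delta_E mkd f = sum_f_R0 (fun k => w k * f (q k - 0)) n.
Proof. reflexivity. Qed.

Lemma mkd_HD f : lip1 f -> Delta_E mkd f <= f 0 + 1.
Proof. intros Hf. rewrite mkd_Delta.
  transitivity (sum_f_R0 (fun k => w k * (f 0 + 1)) n).
  - apply sum_Rle. intros k Hk. apply Rmult_le_compat_l; auto.
    destruct (Hq k Hk) as [H1 H2].
    replace (q k - 0) with (q k) by ring.
    assert (Rabs (f (q k) - f 0) <= Rabs (q k - 0)) by (apply Hf; unfold inPM1; lra).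
    rewrite Rminus_0_r, (Rabs_pos_eq (q k)) in H by lra. apply abs_le_elim in H. lra.
  - rewrite <- scal_sum, Hs. lra. Qed.

Lemma mkd_HD0 : Delta_E mkd (fun _ => 0) = 0.
Proof. rewrite mkd_Delta. transitivity (sum_f_R0 (fun _ => 0) n); [apply sum_eq; intros; ring | apply sum_zero]. Qed.

Lemma mkd_W1 mu : (forall f, lip1 f -> Delta_E mkd f - E1 mu f <= W1 mkd mu) /\ 0 <= W1 mkd mu.
Proof. apply W1_props. apply mkd_HD. apply mkd_HD0. Qed.

End Mk.

Definition f0 (x0 h : R) (x : R) : R := h / PI * cos (PI * (x - x0) / h).

Lemma f0_lip x0 h : 0 < h -> lip1 (f0 x0 h).
Proof. intros Hh x y _ _. unfold f0. pose proof PI_RGT_0.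
  replace (h / PI * cos (PI * (x - x0) / h) - h / PI * cos (PI * (y - x0) / h))
    with (h / PI * (cos (PI * (x - x0) / h) - cos (PI * (y - x0) / h))) by ring.
  rewrite Rabs_mult, (Rabs_pos_eq (h / PI)) by (apply Rlt_le, Rdiv_lt_0_compat; lra).
  eapply Rle_trans. apply Rmult_le_compat_l. apply Rlt_le, Rdiv_lt_0_compat; lra. apply cos_lip.
  replace (PI * (x - x0) / h - PI * (y - x0) / h) with ((PI / h) * (x - y)) by (field; lra).
  rewrite Rabs_mult, (Rabs_pos_eq (PI / h)) by (apply Rlt_le, Rdiv_lt_0_compat; lra).
  right. field. split; lra. Qed.

Lemma f0_node n h k : 0 < h -> f0 (qn n h 0) h (qn n h k - 0) = h / PI * (-1) ^ k.
Proof. intros Hh. unfold f0. rewrite <- cos_kpi. f_equal. f_equal. unfold qn. simpl INR. field. lra. Qed.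
Lemma C_pos t y : 0 < C t y.
Proof. unfold C. apply Rdiv_lt_0_compat. apply INR_fact_lt_0.
  apply Rmult_lt_0_compat; apply INR_fact_lt_0. Qed.

Lemma pmf_nonneg t x p : in01 p -> 0 <= binom_pmf t x p.
Proof. intros [H1 H2]. unfold binom_pmf. pose proof (C_pos t x).
  apply Rmult_le_pos. apply Rmult_le_pos. lra. apply pow_le; lra. apply pow_le; lra. Qed.

Lemma pmf_sum t p : sum_f_R0 (fun x => binom_pmf t x p) t = 1.
Proof. unfold binom_pmf. rewrite <- binomial. replace (p + (1 - p)) with 1 by ring. apply pow1. Qed.

Lemma sum_div (A : nat -> R) n c : sum_f_R0 A n / c = sum_f_R0 (fun k => A k / c) n.
Proof. unfold Rdiv. rewrite Rmult_comm, scal_sum. apply sum_eq; intros; ring. Qed.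

Lemma pmf_ratio t y q q' : (y <= t)%nat ->
  binom_pmf t y q * binom_pmf t y q' / (C t y / 2 ^ t) =
  C t y * (2 * q * q') ^ y * (2 * (1 - q) * (1 - q')) ^ (t - y).
Proof. intros Hy. unfold binom_pmf. pose proof (C_pos t y).
  replace (2 ^ t) with (2 ^ y * 2 ^ (t - y)).
  2:{ rewrite <- pow_add. f_equal. lia. }
  rewrite !Rpow_mult_distr. pose proof (pow_lt 2 y ltac:(lra)). pose proof (pow_lt 2 (t - y) ltac:(lra)). field. repeat split; lra. Qed.

Lemma sq_sum (A : nat -> R) n : (sum_f_R0 A n) ^ 2 = sum_f_R0 (fun k => sum_f_R0 (fun l => A k * A l) n) n.
Proof. rewrite <- sum_mult. ring. Qed.

Lemma chi_id t n (s u : nat -> R) :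
  sum_f_R0 (fun y => (sum_f_R0 (fun k => s k * binom_pmf t y (1/2 + u k)) n) ^ 2 / (C t y / 2 ^ t)) t
  = sum_f_R0 (fun m => C t m * 4 ^ m * (sum_f_R0 (fun k => s k * u k ^ m) n) ^ 2) t.
Proof.
  set (G := fun y k l => s k * s l * (C t y * (2 * (1/2 + u k) * (1/2 + u l)) ^ y *
                         (2 * (1 - (1/2 + u k)) * (1 - (1/2 + u l))) ^ (t - y))).
  transitivity (sum_f_R0 (fun y => sum_f_R0 (fun k => sum_f_R0 (fun l => G y k l) n) n) t).
  { apply sum_eq; intros y Hy. rewrite sq_sum, sum_div. apply sum_eq; intros k Hk.
    rewrite sum_div. apply sum_eq; intros l Hl. unfold G. rewrite <- pmf_ratio by auto.
    unfold Rdiv. ring. }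
  rewrite sum_swap.
  transitivity (sum_f_R0 (fun k => sum_f_R0 (fun l => s k * s l * (4 * u k * u l + 1) ^ t) n) n).
  { apply sum_eq; intros k Hk. rewrite sum_swap. apply sum_eq; intros l Hl.
    unfold G. rewrite sum_scal_l. f_equal.
    replace (4 * u k * u l + 1) with (2 * (1/2 + u k) * (1/2 + u l) + 2 * (1 - (1/2 + u k)) * (1 - (1/2 + u l))) by field.
    rewrite binomial. reflexivity. }
  transitivity (sum_f_R0 (fun k => sum_f_R0 (fun l => sum_f_R0 (fun m =>
      C t m * 4 ^ m * ((s k * u k ^ m) * (s l * u l ^ m))) t) n) n).
  { apply sum_eq; intros k Hk. apply sum_eq; intros l Hl. rewrite binomial, <- sum_scal_l.
    apply sum_eq; intros m Hm. rewrite pow1, !Rpow_mult_distr. ring. }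
  transitivity (sum_f_R0 (fun k => sum_f_R0 (fun m => sum_f_R0 (fun l =>
      C t m * 4 ^ m * ((s k * u k ^ m) * (s l * u l ^ m))) n) t) n).
  { apply sum_eq; intros k Hk. apply sum_swap. }
  rewrite sum_swap. apply sum_eq; intros m Hm.
  rewrite sq_sum, <- sum_scal_l. apply sum_eq; intros k Hk. rewrite <- sum_scal_l.
  apply sum_eq; intros l Hl. ring. Qed.
Lemma l1_chi t (d p : nat -> R) X :
  (forall y, (y <= t)%nat -> 0 < p y) -> sum_f_R0 p t = 1 ->
  sum_f_R0 (fun y => d y ^ 2 / p y) t <= X ^ 2 -> 0 < X ->
  sum_f_R0 (fun y => Rabs (d y)) t <= X.
Proof. intros Hp Hs Hc HX.
  transitivity (sum_f_R0 (fun y => d y ^ 2 / p y / (2 * X) + X / 2 * p y) t).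
  - apply sum_Rle; intros y Hy. pose proof (Hp y Hy).
    rewrite <- (pow2_abs (d y)). set (a := Rabs (d y)).
    set (r := a ^ 2 / p y / (2 * X)).
    assert (r * (2 * X * p y) = a ^ 2) by (unfold r; field; lra).
    assert (0 <= (a - X * p y) ^ 2) by (apply pow2_ge_0).
    assert (0 < 2 * X * p y) by (apply Rmult_lt_0_compat; lra).
    nra.
  - rewrite sum_plus, <- sum_div, sum_scal_l, Hs.
    apply Rmult_le_compat_r with (r := / (2 * X)) in Hc. 2:{ left; apply Rinv_0_lt_compat; lra. }
    unfold Rdiv at 1. replace (X ^ 2 * / (2 * X)) with (X / 2) in Hc by (field; lra). lra. Qed.

Section Obs.
Variables (n : nat) (w q : nat -> R).
Hypothesis Hw : forall k, 0 <= w k.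
Hypothesis Hq : forall k, (k <= n)%nat -> in01 (q k).
Hypothesis Hs : sum_f_R0 w n = 1.

Definition alpha t y := sum_f_R0 (fun k => w k * binom_pmf t y (q k)) n.

Lemma obs_mk t xy : obs (mkd n w q Hw Hq Hs) t xy = binom_pmf t (fst xy) 0 * alpha t (snd xy).
Proof. change (mkE n w q (fun p q0 => binom_pmf t (fst xy) p * binom_pmf t (snd xy) q0) =
    binom_pmf t (fst xy) 0 * alpha t (snd xy)).
  unfold mkE, alpha. rewrite <- sum_scal_l. apply sum_eq; intros; ring. Qed.

Lemma alpha_nonneg t y : 0 <= alpha t y.
Proof. unfold alpha. eapply Rle_trans; [right; symmetry; apply (sum_zero n)|]. apply sum_Rle.
  intros k Hk. apply Rmult_le_pos; auto. apply pmf_nonneg; auto. Qed.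

Lemma obs_mk_nonneg t xy : 0 <= obs (mkd n w q Hw Hq Hs) t xy.
Proof. rewrite obs_mk. apply Rmult_le_pos. apply pmf_nonneg. unfold in01; lra. apply alpha_nonneg. Qed.

Lemma alpha_sum t : sum_f_R0 (alpha t) t = 1.
Proof. unfold alpha. rewrite sum_swap. rewrite <- Hs. apply sum_eq; intros k Hk.
  rewrite sum_scal_l, pmf_sum. ring. Qed.

Lemma obs_mk_sum t : lsum (pairs_upto t) (obs (mkd n w q Hw Hq Hs) t) = 1.
Proof. rewrite (lsum_ext _ _ (fun xy => binom_pmf t (fst xy) 0 * alpha t (snd xy))) by (intros; apply obs_mk).
  unfold pairs_upto. rewrite (lsum_prod _ _ (fun x => binom_pmf t x 0) (alpha t)), !lsum_seq, pmf_sum, alpha_sum. ring. Qed.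
End Obs.

Lemma obs_diff n w1 w2 q H1 H2 H3 H4 H5 H6 t :
  lsum (pairs_upto t) (fun xy => Rabs (obs (mkd n w1 q H1 H2 H3) t xy - obs (mkd n w2 q H4 H5 H6) t xy))
  = sum_f_R0 (fun y => Rabs (sum_f_R0 (fun k => (w1 k - w2 k) * binom_pmf t y (q k)) n)) t.
Proof.
  rewrite (lsum_ext _ _ (fun xy => binom_pmf t (fst xy) 0 *
      Rabs (sum_f_R0 (fun k => (w1 k - w2 k) * binom_pmf t (snd xy) (q k)) n))).
  - unfold pairs_upto. rewrite (lsum_prod _ _ (fun x => binom_pmf t x 0)
      (fun y => Rabs (sum_f_R0 (fun k => (w1 k - w2 k) * binom_pmf t y (q k)) n))), !lsum_seq, pmf_sum. ring.
  - intros xy _. rewrite !obs_mk. rewrite <- Rmult_minus_distr_l, Rabs_mult, Rabs_pos_eq.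
    f_equal. f_equal. unfold alpha. rewrite <- sum_minus'. apply sum_eq; intros; ring.
    apply pmf_nonneg; unfold in01; lra. Qed.
Definition sgm (n k : nat) : R := wa n k - wb n k.
Definition uu (n : nat) (h : R) (k : nat) : R := - INR n * h / 2 + INR k * h.

Lemma sgm_eq n k : sgm n k = 2 / 2 ^ n * ((-1) ^ k * binom n k).
Proof. unfold sgm, wa, wb. field. apply pow_nonzero; lra. Qed.

Lemma M_zero n h m : (m < n)%nat -> sum_f_R0 (fun k => sgm n k * uu n h k ^ m) n = 0.
Proof. intros Hm.
  transitivity (2 / 2 ^ n * Sd n (fun k => (- INR n * h / 2 + INR k * h) ^ m)).
  - unfold Sd. rewrite <- sum_scal_l. apply sum_eq; intros k Hk. rewrite sgm_eq. unfold uu. ring.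
  - rewrite (Pol_vanish n m); [ring | auto | apply Pol_pow]. Qed.

Lemma M_bound n h m : 0 < h ->
  Rabs (sum_f_R0 (fun k => sgm n k * uu n h k ^ m) n) <= 2 * (INR n * h / 2) ^ m.
Proof. intros Hh. eapply Rle_trans; [apply sum_f_R0_triangle|].
  transitivity (sum_f_R0 (fun k => 2 / 2 ^ n * binom n k * (INR n * h / 2) ^ m) n).
  - apply sum_Rle; intros k Hk. rewrite Rabs_mult, sgm_eq, Rabs_mult, Rabs_mult, pow_1_abs.
    rewrite (Rabs_pos_eq (binom n k)) by apply binom_nonneg.
    rewrite (Rabs_pos_eq (2 / 2 ^ n)) by (apply Rlt_le, Rdiv_lt_0_compat; [lra | apply pow_lt; lra]).
    rewrite Rmult_1_l. apply Rmult_le_compat_l.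
    apply Rmult_le_pos. apply Rlt_le, Rdiv_lt_0_compat; [lra | apply pow_lt; lra]. apply binom_nonneg.
    rewrite <- RPow_abs. apply pow_incr. split. apply Rabs_pos.
    apply le_INR in Hk. pose proof (pos_INR k). unfold uu. apply Rabs_le. nra.
  - rewrite <- scal_sum. rewrite (sum_scal_l (binom n)), binom_sum. right. field. apply pow_nonzero; lra. Qed.

Definition Bterm (t n : nat) (h : R) (m : nat) : R :=
  if (n <=? m)%nat then 4 * C t m * ((INR n * h) ^ 2) ^ m else 0.

Lemma chi_le t n h : 0 < h ->
  sum_f_R0 (fun m => C t m * 4 ^ m * (sum_f_R0 (fun k => sgm n k * uu n h k ^ m) n) ^ 2) t
  <= sum_f_R0 (Bterm t n h) t.
Proof. intros Hh. apply sum_Rle; intros m Hm. unfold Bterm.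
  destruct (Nat.leb_spec n m).
  - pose proof (M_bound n h m Hh). pose proof (C_pos t m).
    set (M := sum_f_R0 (fun k => sgm n k * uu n h k ^ m) n) in *.
    assert (M ^ 2 <= (2 * (INR n * h / 2) ^ m) ^ 2).
    { rewrite <- (pow2_abs M). apply pow_incr. split. apply Rabs_pos. auto. }
    assert (4 ^ m * (2 * (INR n * h / 2) ^ m) ^ 2 = 4 * ((INR n * h) ^ 2) ^ m).
    { replace ((2 * (INR n * h / 2) ^ m) ^ 2) with (4 * ((INR n * h / 2) ^ m * (INR n * h / 2) ^ m)) by ring.
      rewrite <- Rpow_mult_distr. replace (4 ^ m * (4 * (INR n * h / 2 * (INR n * h / 2)) ^ m)) with
        (4 * (4 ^ m * (INR n * h / 2 * (INR n * h / 2)) ^ m)) by ring.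
      rewrite <- Rpow_mult_distr. f_equal. f_equal. field. }
    assert (0 <= 4 ^ m) by (apply pow_le; lra).
    assert (4 ^ m * M ^ 2 <= 4 ^ m * (2 * (INR n * h / 2) ^ m) ^ 2) by (apply Rmult_le_compat_l; auto).
    nra.
  - rewrite M_zero by auto. simpl. lra. Qed.

Lemma main_two (t N n : nat) (h X : R) : (0 < n)%nat -> 0 < h -> INR n * h <= 1 -> 0 < X ->
  sum_f_R0 (Bterm t n h) t <= X ^ 2 -> INR N * X <= 1/2 ->
  forall g, exists Rd, risk t N Rd g >= h / (2 * PI).
Proof. intros Hn Hh Hnh HX HB HNX g.
  pose proof (wa_nonneg n) as Hwa. pose proof (wb_nonneg n) as Hwb.
  pose proof (wa_sum n Hn) as Swa. pose proof (wb_sum n Hn) as Swb.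
  assert (Hq : forall k, (k <= n)%nat -> in01 (qn n h k)) by (intros; apply qn_in01; auto).
  set (Ra := mkd n (wa n) (qn n h) Hwa Hq Swa).
  set (Rb := mkd n (wb n) (qn n h) Hwb Hq Swb).
  pose proof PI_RGT_0.
  assert (HW : forall mu, W1 Ra mu + W1 Rb mu >= 2 * h / PI).
  { intros mu. destruct (mkd_W1 n (wa n) (qn n h) Hwa Hq Swa mu) as [A _].
    destruct (mkd_W1 n (wb n) (qn n h) Hwb Hq Swb mu) as [B _].
    pose proof (A _ (f0_lip (qn n h 0) h Hh)) as A1.
    pose proof (B _ (lip1_neg _ (f0_lip (qn n h 0) h Hh))) as B1.
    rewrite E1_neg in B1 by (apply f0_lip; auto).
    rewrite !mkd_Delta in A1, B1.
    assert (sum_f_R0 (fun k => wa n k * f0 (qn n h 0) h (qn n h k - 0)) n +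
            sum_f_R0 (fun k => wb n k * (-1 * f0 (qn n h 0) h (qn n h k - 0))) n = 2 * h / PI).
    { rewrite <- sum_plus. transitivity (sum_f_R0 (fun k => h / PI * 2 / 2 ^ n * binom n k) n).
      - apply sum_eq; intros k Hk. rewrite f0_node by auto. unfold wa, wb.
        pose proof (m1_sq k). transitivity (h / PI * 2 / 2 ^ n * binom n k * ((-1) ^ k * (-1) ^ k)).
        field. repeat split; first [lra | apply pow_nonzero; lra]. rewrite H0; ring.
      - rewrite sum_scal_l, binom_sum. field. repeat split; first [lra | apply pow_nonzero; lra]. }
    unfold Ra, Rb. lra. }
  assert (HT : lsum (pairs_upto t) (fun xy => Rabs (obs Ra t xy - obs Rb t xy)) <= X).
  { unfold Ra, Rb. rewrite obs_diff.
    apply (l1_chi t _ (fun y => C t y / 2 ^ t)).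
    - intros y _. apply Rdiv_lt_0_compat. apply C_pos. apply pow_lt; lra.
    - rewrite <- sum_div. transitivity ((1 + 1) ^ t / 2 ^ t).
      rewrite binomial. f_equal. apply sum_eq; intros; rewrite !pow1; ring.
      replace (1 + 1) with 2 by ring. field. apply pow_nonzero; lra.
    - eapply Rle_trans; [|exact HB]. eapply Rle_trans; [|apply (chi_le t n h Hh)].
      rewrite <- chi_id. right. apply sum_eq; intros y Hy; reflexivity.
    - auto. }
  assert (Hr : risk t N Ra g + risk t N Rb g >= (2 * h / PI) / 2).
  { apply (lecam t N Ra Rb g (2 * h / PI) X HW).
    apply Rlt_le, Rdiv_lt_0_compat; lra.
    intros mu; apply (mkd_W1 n (wa n) (qn n h) Hwa Hq Swa mu).
    intros mu; apply (mkd_W1 n (wb n) (qn n h) Hwb Hq Swb mu).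
    intros; apply obs_mk_nonneg. intros; apply obs_mk_nonneg.
    apply obs_mk_sum. apply obs_mk_sum. exact HT. exact HNX. }
  destruct (Rle_dec (h / (2 * PI)) (risk t N Ra g)).
  - exists Ra; lra.
  - exists Rb. replace ((2 * h / PI) / 2) with (2 * (h / (2 * PI))) in Hr by (field; lra). lra. Qed.
Lemma ln_le' x y : 0 < x -> x <= y -> ln x <= ln y.
Proof. intros Hx [H|H]. left; apply ln_increasing; auto. subst; lra. Qed.

Lemma exp_pow' x m : exp x ^ m = exp (x * INR m).
Proof. induction m. simpl. rewrite Rmult_0_r, exp_0; auto.
  rewrite S_INR. simpl pow. rewrite IHm. rewrite <- exp_plus. f_equal. ring. Qed.

Lemma one_plus_pow m : (0 < m)%nat -> (1 + 1 / INR m) ^ m <= 3.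
Proof. intros Hm. assert (0 < INR m) by (apply lt_0_INR; auto).
  eapply Rle_trans. apply pow_incr. split. assert (0 < 1 / INR m) by (apply Rdiv_lt_0_compat; lra). lra.
  apply exp_ineq1_le. rewrite exp_pow'. replace (1 / INR m * INR m) with 1 by (field; lra). apply exp_le_3. Qed.

Lemma fact_lb m : (INR m / 3) ^ m <= INR (Factorial.fact m).
Proof. induction m. simpl; lra.
  rewrite fact_simpl, mult_INR, S_INR. simpl pow.
  destruct m.
  - simpl. lra.
  - set (x := INR (S m)) in *. assert (0 < x) by (apply lt_0_INR; lia).
    assert (((x + 1) / 3) ^ S m = (x / 3) ^ S m * (1 + 1 / x) ^ S m).
    { rewrite <- Rpow_mult_distr. f_equal. field. lra. }
    pose proof (one_plus_pow (S m) ltac:(lia)). fold x in H1.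
    assert (0 <= (x / 3) ^ S m) by (apply pow_le; lra).
    assert (0 <= (1 + 1 / x) ^ S m) by (apply pow_le; assert (0 < 1/x) by (apply Rdiv_lt_0_compat; lra); lra).
    rewrite H0. set (A := (x / 3) ^ S m) in *. set (B := (1 + 1 / x) ^ S m) in *.
    assert (A * B <= INR (Factorial.fact (S m)) * 3).
    { apply Rle_trans with (INR (Factorial.fact (S m)) * B). apply Rmult_le_compat_r; lra.
      apply Rmult_le_compat_l. pose proof (INR_fact_lt_0 (S m)); lra. lra. }
    assert (0 <= (x + 1) / 3) by (apply Rlt_le, Rdiv_lt_0_compat; lra).
    apply Rle_trans with ((x + 1) / 3 * (INR (Factorial.fact (S m)) * 3)).
    apply Rmult_le_compat_l; auto. right; field. Qed.

Lemma fact_ratio t m : (m <= t)%nat -> INR (Factorial.fact t) <= INR t ^ m * INR (Factorial.fact (t - m)).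
Proof. induction m; intros Hm. rewrite Nat.sub_0_r; simpl; lra.
  eapply Rle_trans. apply IHm; lia.
  replace (t - m)%nat with (S (t - S m)) by lia. rewrite fact_simpl, mult_INR.
  simpl pow. pose proof (INR_fact_lt_0 (t - S m)). pose proof (pow_le (INR t) m (pos_INR t)).
  assert (INR (S (t - S m)) <= INR t) by (apply le_INR; lia).
  set (F := INR (Factorial.fact (t - S m))) in *. set (P := INR t ^ m) in *.
  assert (INR (S (t - S m)) * F <= INR t * F) by (apply Rmult_le_compat_r; lra).
  apply Rle_trans with (P * (INR t * F)). apply Rmult_le_compat_l; auto. right; ring. Qed.

Lemma C_le t m : (m <= t)%nat -> C t m <= INR t ^ m / INR (Factorial.fact m).
Proof. intros Hm. unfold C. pose proof (fact_ratio t m Hm).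
  pose proof (INR_fact_lt_0 m). pose proof (INR_fact_lt_0 (t - m)).
  unfold Rdiv. rewrite Rinv_mult. 
  apply Rle_trans with (INR t ^ m * INR (Factorial.fact (t - m)) * (/ INR (Factorial.fact m) * / INR (Factorial.fact (t - m)))).
  apply Rmult_le_compat_r; auto. apply Rlt_le, Rmult_lt_0_compat; apply Rinv_0_lt_compat; auto.
  right. field. lra. Qed.

Lemma geo_sum n t : sum_f_R0 (fun m => if (n <=? m)%nat then (1/4) ^ m else 0) t <= 4/3 * (1/4) ^ n.
Proof.
  assert (H : forall t, (t < n)%nat /\ sum_f_R0 (fun m => if (n <=? m)%nat then (1/4) ^ m else 0) t = 0 \/
                  sum_f_R0 (fun m => if (n <=? m)%nat then (1/4) ^ m else 0) t + 4/3 * (1/4) ^ (S t) <= 4/3 * (1/4) ^ n).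
  { induction t0.
    - simpl. destruct n. right. simpl. lra. left. split. lia. reflexivity.
    - simpl sum_f_R0. destruct IHt0 as [[H1 H2]|H1].
      + rewrite H2. destruct (Nat.leb_spec n (S t0)).
        * right. replace n with (S t0) by lia. simpl. lra.
        * left. split. lia. lra.
      + right. pose proof (pow_le (1/4) t0 ltac:(lra)). destruct (Nat.leb_spec n (S t0)); simpl pow in *; lra. }
  destruct (H t) as [[_ H2]|H2]. rewrite H2. pose proof (pow_le (1/4) n ltac:(lra)). lra.
  pose proof (pow_le (1/4) (S t) ltac:(lra)). lra. Qed.

Lemma Bsum_bound t n h : (0 < n)%nat -> INR t * (INR n * h) ^ 2 <= INR n / 16 ->
  sum_f_R0 (Bterm t n h) t <= (3 * (1/2) ^ n) ^ 2.
Proof. intros Hn Hz. set (z := (INR n * h) ^ 2) in *.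
  assert (Hz0 : 0 <= z) by (unfold z; apply pow2_ge_0).
  apply Rle_trans with (sum_f_R0 (fun m => 4 * (if (n <=? m)%nat then (1/4) ^ m else 0)) t).
  - apply sum_Rle; intros m Hm. unfold Bterm. destruct (Nat.leb_spec n m); [|lra].
    rewrite Rmult_assoc. apply Rmult_le_compat_l; [lra|].
    pose proof (C_le t m Hm). pose proof (INR_fact_lt_0 m). pose proof (fact_lb m).
    assert (Hm' : INR n <= INR m) by (apply le_INR; auto).
    assert (0 <= INR t * z) by (apply Rmult_le_pos; auto; apply pos_INR).
    assert ((INR t * z) ^ m <= (INR m / 16) ^ m) by (apply pow_incr; lra).
    assert ((INR m / 16) ^ m = (3/16) ^ m * (INR m / 3) ^ m) by (rewrite <- Rpow_mult_distr; f_equal; field).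
    assert ((3/16) ^ m <= (1/4) ^ m) by (apply pow_incr; lra).
    assert (0 <= (3/16) ^ m) by (apply pow_le; lra).
    apply Rle_trans with (INR t ^ m / INR (Factorial.fact m) * z ^ m).
    apply Rmult_le_compat_r. apply pow_le; auto. auto.
    replace (INR t ^ m / INR (Factorial.fact m) * z ^ m) with ((INR t * z) ^ m / INR (Factorial.fact m))
      by (rewrite Rpow_mult_distr; field; lra).
    apply Rle_trans with ((3/16) ^ m). 2: auto.
    unfold Rdiv. apply Rle_trans with ((3/16) ^ m * (INR m / 3) ^ m * / INR (Factorial.fact m)).
    apply Rmult_le_compat_r. left; apply Rinv_0_lt_compat; auto. lra.
    rewrite Rmult_assoc. apply Rle_trans with ((3/16)^m * 1); [|lra]. apply Rmult_le_compat_l; auto.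
    apply Rle_trans with (INR (Factorial.fact m) * / INR (Factorial.fact m)).
    apply Rmult_le_compat_r. left; apply Rinv_0_lt_compat; auto. auto. right; field; lra.
  - rewrite sum_scal_l. pose proof (geo_sum n t).
    replace ((3 * (1/2) ^ n) ^ 2) with (9 * (1/4) ^ n).
    pose proof (pow_le (1/4) n ltac:(lra)). lra.
    replace ((3 * (1/2) ^ n) ^ 2) with (9 * ((1/2) ^ n * (1/2) ^ n)) by ring.
    rewrite <- Rpow_mult_distr. f_equal. f_equal. field. Qed.

Lemma ln2_lb : 1/2 <= ln 2.
Proof. assert (exp (1/2) <= 2).
  { assert (exp (1/2) * exp (1/2) = exp 1) by (rewrite <- exp_plus; f_equal; field).
    pose proof exp_le_3. pose proof (exp_pos (1/2)). nra. }
  rewrite <- (ln_exp (1/2)). apply ln_le'. apply exp_pos. auto. Qed.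

Lemma log2_ln N : (0 < N)%nat -> INR (Nat.log2 N) * ln 2 <= ln (INR N).
Proof. intros HN. destruct (Nat.log2_spec N HN) as [H1 _].
  apply le_INR in H1. rewrite pow_INR in H1. simpl INR in H1.
  replace (1 + 1) with 2 in H1 by ring. rewrite <- ln_pow by lra. apply ln_le'. apply pow_lt; lra. auto. Qed.
Lemma max_bound c a b B : c * a <= B -> c * b <= B -> c * Rmax a b <= B.
Proof. intros; unfold Rmax; destruct (Rle_dec a b); auto. Qed.

Lemma inv_le_inv a b : 0 < a -> a <= b -> 1 / b <= 1 / a.
Proof. intros Ha Hab. unfold Rdiv. rewrite !Rmult_1_l. apply Rinv_le_contravar; auto. Qed.

Theorem theorem1 :
  exists c : R, 0 < c /\
  forall t N : nat, (0 < t)%nat -> (0 < N)%nat ->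
    INR t <= Rpower (INR N) (2 * (exp 4 - 1)) / 36 ->
    forall g : list (nat * nat) -> dist1,
    exists Rd : dist2,
      risk t N Rd g >= c * Rmax (1 / INR t) (1 / sqrt (INR t * ln (INR N))).
Proof.
  exists (1/200). split. lra.
  intros t N Ht HN Hcond g.
  assert (Ht1 : 1 <= INR t) by (apply (le_INR 1); lia).
  assert (HN2 : (2 <= N)%nat).
  { destruct (Nat.eq_dec N 1) as [E|E]; [|lia]. subst N. exfalso.
    unfold Rpower in Hcond. simpl INR in Hcond. rewrite ln_1, Rmult_0_r, exp_0 in Hcond. lra. }
  assert (HlnN : ln 2 <= ln (INR N)).
  { apply ln_le'. lra. apply (le_INR 2) in HN2. simpl in HN2. lra. }
  pose proof ln2_lb as Hl2.
  pose proof PI_RGT_0 as Hpi. pose proof PI_4 as Hpi4.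
  set (k := Nat.log2 N).
  pose proof (log2_ln N HN) as Hk. fold k in Hk.
  assert (Hk2 : INR N < 2 ^ S k).
  { destruct (Nat.log2_spec N HN) as [_ H2]. apply lt_INR in H2. rewrite pow_INR in H2.
    simpl INR in H2. replace (1 + 1) with 2 in H2 by ring. exact H2. }
  assert (Hkpos : 0 <= INR k) by apply pos_INR.
  set (r := sqrt (INR t * ln (INR N))).
  assert (Hr0 : 0 < r) by (apply sqrt_lt_R0; apply Rmult_lt_0_compat; lra).
  assert (Hrr : r * r = INR t * ln (INR N)) by (apply sqrt_sqrt; apply Rmult_le_pos; lra).
  destruct (Compare_dec.le_lt_dec (k + 4) (16 * t)) as [Hc|Hc].
  -
    set (n0 := (k + 4)%nat).
    assert (Hn0 : INR n0 = INR k + 4) by (unfold n0; rewrite plus_INR; simpl; ring).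
    assert (Hn016 : INR n0 <= 16 * INR t).
    { pose proof (le_INR _ _ Hc) as Hc'. rewrite mult_INR in Hc'. replace (INR 16) with 16 in Hc' by (simpl; ring). exact Hc'. }
    set (s := sqrt (INR n0 * INR t)).
    assert (Hs0 : 0 < s) by (apply sqrt_lt_R0; apply Rmult_lt_0_compat; lra).
    assert (Hss : s * s = INR n0 * INR t) by (apply sqrt_sqrt; apply Rmult_le_pos; lra).
    set (h := 1 / (4 * s)).
    assert (Hh : 0 < h) by (unfold h; apply Rdiv_lt_0_compat; lra).
    destruct (main_two t N n0 h (3 * (1/2) ^ n0)) with (g := g) as [Rd HRd].
    + unfold n0; lia.
    + exact Hh.
    + unfold h. assert (INR n0 <= 4 * s) by nra.
      replace (INR n0 * (1 / (4 * s))) with (INR n0 / (4 * s)) by (field; lra).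
      apply Rmult_le_reg_r with (4 * s). lra. unfold Rdiv. rewrite Rmult_assoc, Rinv_l by lra. lra.
    + apply Rmult_lt_0_compat. lra. apply pow_lt; lra.
    + apply Bsum_bound. unfold n0; lia.
      assert (E : (INR n0 * h) ^ 2 = INR n0 ^ 2 / (16 * (s * s))) by (unfold h; field; lra).
      rewrite E, Hss. right. field. lra.
    + assert (E : (1/2) ^ n0 = / (2 ^ S k * 8)).
      { replace (1/2) with (/2) by field. rewrite pow_inv. replace (2 ^ S k * 8) with (2 ^ n0). reflexivity.
        unfold n0. replace (k + 4)%nat with (S k + 3)%nat by lia. rewrite pow_add. simpl. ring. }
      rewrite E. pose proof (pow_lt 2 (S k) ltac:(lra)).
      apply Rmult_le_reg_r with (2 ^ S k * 8). lra.
      rewrite Rmult_assoc, Rmult_assoc, Rinv_l by lra. lra.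
    + exists Rd. apply Rle_ge. eapply Rle_trans; [|apply Rge_le; exact HRd].
      assert (Hs4t : s <= 4 * INR t) by nra.
      assert (Hn0ln : INR n0 <= 10 * ln (INR N)).
      { rewrite Hn0. assert (INR k <= 2 * ln (INR N)) by nra. lra. }
      assert (Hs4r : s <= 4 * r) by nra.
      assert (Eh : h / (2 * PI) = 1 / (8 * PI * s)) by (unfold h; field; lra).
      rewrite Eh. apply max_bound.
      * replace (1/200 * (1 / INR t)) with (1 / (200 * INR t)) by (field; lra).
        apply inv_le_inv. nra. nra.
      * fold r. replace (1/200 * (1 / r)) with (1 / (200 * r)) by (field; lra).
        apply inv_le_inv. nra. nra.
  - (* large N relative to t: exact moment matching *)
    set (n := S t). set (h := 1 / INR n).
    assert (Hn : INR n = INR t + 1) by (unfold n; apply S_INR).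
    assert (HNpos : 1 <= INR N) by (apply (le_INR 1); lia).
    destruct (main_two t N n h (1 / (2 * INR N))) with (g := g) as [Rd HRd].
    + unfold n; lia.
    + unfold h. apply Rdiv_lt_0_compat; lra.
    + unfold h. right. field. lra.
    + apply Rdiv_lt_0_compat; lra.
    + apply Rle_trans with 0. right. transitivity (sum_f_R0 (fun _ => 0) t).
      apply sum_eq; intros m Hm. unfold Bterm. destruct (Nat.leb_spec n m). unfold n in *; lia. reflexivity.
      apply sum_zero. apply pow2_ge_0.
    + right. field. lra.
    + exists Rd. apply Rle_ge. eapply Rle_trans; [|apply Rge_le; exact HRd].
      assert (HlnT : INR t <= ln (INR N)).
      { apply lt_INR in Hc. rewrite plus_INR, mult_INR in Hc. simpl INR in Hc. nra. }
      assert (Hrt : INR t <= r) by nra.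
      assert (Eh : h / (2 * PI) = 1 / (2 * PI * (INR t + 1))) by (unfold h; rewrite Hn; field; lra).
      rewrite Eh. apply max_bound.
      * replace (1/200 * (1 / INR t)) with (1 / (200 * INR t)) by (field; lra).
        apply inv_le_inv. nra. nra.
      * fold r. replace (1/200 * (1 / r)) with (1 / (200 * r)) by (field; lra).
        apply inv_le_inv. nra. nra.
Qed.
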